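(* There is an absolute constant $C$ such that for every integer $r\ge 10$ there exists an integer $d\le C r^4\log r$ (i.e. $d\in O(r^4\log r)$) such that the following holds for every integer $k\ge 1$. Let $G$ be a $k\times k$ pseudogrid with grid-partition $\mathcal{P}:=\{V(P_\mu):\mu\in\mathrm{VE}(G_k)\}$ and let $\varphi$ be a vertex colouring of $G$ such that for every $A\subseteq\varphi(V(G))$, $|\varphi_{\mathcal{P}}^{-1}(A)\cap\mathrm{VE}(\mathrm{int}_r(G_k))|\ge d|A|$. Then there exists $S\subseteq\mathrm{int}_r(G)$ such that (i) $|\varphi^{-1}(\alpha)\cap S|=2$ for each $\alpha\in\varphi(V(G))$; and (ii) $|\tilde{B}_r(v)\cap S|\le 2$ for each $v\in S$.
   Context: The grid $G_k$ has vertex set $\{1,\dots,k\}^2$, with $(i_1,j_1)$ and $(i_2,j_2)$ adjacent iff $|i_1-i_2|+|j_1-j_2|=1$. For a graph $H$, $\mathrm{VE}(H):=V(H)\cup E(H)$. A $k\times k$ pseudogrid is any graph obtained from $G_k$ as follows: each edge $vw$ is replaced by a path $\overline{P}_{vw}$ with endpoints $v,w$ (subdividing $vw$ zero or more times); each vertex $v=(i,j)$ of degree $4$ is replaced by a nonempty path $P_v$: if $P_v$ has one vertex it plays the role of $v$; otherwise its endpoints $p,q$ are attached, $p$ to the paths $\overline{P}_{vw}$ towards two of the grid neighbours of $v$ and $q$ to the other two, in one of the patterns (Q1) $p$: $(i-1,j),(i,j-1)$, $q$: $(i+1,j),(i,j+1)$; (Q2) $p$: $(i,j+1),(i-1,j)$,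 $q$: $(i,j-1),(i+1,j)$; (Q3) $p$: $(i-1,j),(i+1,j)$, $q$: $(i,j-1),(i,j+1)$. For each grid edge $vw$, $P_{vw}$ is the (possibly empty) path of internal vertices of $\overline{P}_{vw}$; for each grid vertex $v$ of degree less than $4$, $P_v$ is the one-vertex path on $v$; $\{V(P_\mu):\mu\in\mathrm{VE}(G_k)\}$ is the grid-partition. $\mathrm{int}_r(G_k)$ is the subgraph of $G_k$ induced on $\{1+r,\dots,k-r\}^2$, and $\mathrm{int}_r(G):=\bigcup_{\mu\in\mathrm{VE}(\mathrm{int}_r(G_k))}V(P_\mu)$. Boxes: for a vertex $v=(i,j)$ of $G_k$, $B_r(v):=(\{i-r,\dots,i+r\}\times\{j-r,\dots,j+r\})\cap V(G_k)$; for an edge $vw$, $B_r(vw):=B_r(v)\cup B_r(w)$; $G_r(\mu):=G_k[B_r(\mu)]$; $\tilde{B}_r(\mu):=\bigcup_{\nu\in\mathrm{VE}(G_r(\mu))}V(P_\nu)$; for $v\in V(G)$, $\tilde{B}_r(v):=\tilde{B}_r(\mu_v)$ where $\mu_v$ is the unique object with $v\in V(P_{\mu_v})$. For a vertex colouring $\varphi$: $\varphi(V(G))$ is the set of colours used; $\varphi^{-1}(\alpha):=\{v\in V(G):\varphi(v)=\alpha\}$; $\varphi_{\mathcal{P}}(\mu):=\{\varphi(v):v\in V(P_\mu)\}$; $\varphi_{\mathcal{P}}^{-1}(A):=\{\mu\in\mathrm{VE}(G_k):A\cap\varphi_{\mathcal{P}}(\mu)\neq\emptyset\}$. *)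

(* Defs.v *)
From mathcomp Require Import all_boot.
From Stdlib Require Import Reals.
Set Implicit Arguments. Unset Strict Implicit. Unset Printing Implicit Defensive.

(* The grid G_k.  Coordinates are 0-indexed: the paper's vertex (i,j),     *)
(* 1 <= i,j <= k, is our (i-1, j-1) : 'I_k * 'I_k.                         *)
(* An object of VE(G_k) is encoded as (v, None) for the vertex v, and      *)
(* (v, Some false) for the edge v -- v+(1,0), (v, Some true) for the edge  *)
(* v -- v+(0,1); the latter two are genuine edges only if that neighbour   *)
(* exists (see [gvalid]).                                                  *)
Definition gvert (k : nat) := ('I_k * 'I_k)%type.
Definition gobj (k : nat) := (gvert k * option bool)%type.

Definition gvalid k (o : gobj k) : bool :=
  match o.2 with
  | None => true
  | Some false => (o.1.1 : nat).+1 < k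
  | Some true => (o.1.2 : nat).+1 < k
  end.

Definition VE k : {set gobj k} := [set o | gvalid o].

Definition gends k (o : gobj k) : seq (nat * nat) :=
  let a := (o.1.1 : nat) in let b := (o.1.2 : nat) in
  match o.2 with
  | None => [:: (a, b)]
  | Some false => [:: (a, b); (a.+1, b)]
  | Some true => [:: (a, b); (a, b.+1)]
  end.

(* a grid vertex has degree < 4 in G_k iff it lies on the boundary *)
Definition gboundary k (v : gvert k) : bool :=
  [|| (v.1 : nat) == 0, (v.1 : nat) == k.-1, (v.2 : nat) == 0 | (v.2 : nat) == k.-1].

(* directions from a grid vertex (i,j): N = (i-1,j), W = (i,j-1),
   S = (i+1,j), E = (i,j+1) *)
Inductive gdir := DN | DW | DS | DE.

Inductive pattern := Q1 | Q2 | Q3.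

(* [pside p d] is true iff, in pattern p, the neighbour in direction d is
   attached to the endpoint "p" (position 0) of P_v, false if to "q". *)
Definition pside (p : pattern) (d : gdir) : bool :=
  match p, d with
  | Q1, DN | Q1, DW => true
  | Q2, DE | Q2, DN => true
  | Q3, DN | Q3, DS => true
  | _, _ => false
  end.

(* A k x k pseudogrid on the finite vertex type V.  Each vertex x of G     *)
(* lies on the path P_mu for mu = pobj x, at position ppos x along it;     *)
(* plen mu is the number of vertices of P_mu.  For a grid edge e = vw,     *)
(* P_e is the path of internal vertices of the subdivided path from v      *)
(* (position 0 side) to w.  For a grid vertex v, P_v runs from p (pos 0)  *)
(* to q (pos plen-1), and ppat v is its attachment pattern.                *)
Record pseudogrid (k : nat) (V : finType) := Pseudogrid {
  pobj : V -> gobj k;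
  ppos : V -> nat;
  plen : gobj k -> nat;
  ppat : gvert k -> pattern;
  pobj_valid : forall x, gvalid (pobj x);
  ppos_lt : forall x, ppos x < plen (pobj x);
  ppos_inj : forall x y, pobj x = pobj y -> ppos x = ppos y -> x = y;
  ppos_surj : forall o i, gvalid o -> i < plen o ->
                exists x, pobj x = o /\ ppos x = i;
  plen_vert : forall v : gvert k, 0 < plen (v, None);
  plen_bound : forall v : gvert k, gboundary v -> plen (v, None) = 1
}.

Section PseudogridGraph.
Variables (k : nat) (V : finType) (G : pseudogrid k V).

Definition attach_pos (v : gvert k) (d : gdir) : nat :=
  if pside (ppat G v) d then 0 else (plen G (v, None)).-1.

Definition other_end (v w : gvert k) (b : bool) : bool :=
  ((w.1 : nat) == v.1 + ~~ b) && ((w.2 : nat) == v.2 + b).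

Definition padj0 (x y : V) : Prop :=
  (pobj G x = pobj G y /\ ppos G y = (ppos G x).+1)
  \/ (* P_v -> first internal vertex of the subdivided edge (v, Some b) *)
  (exists v b, pobj G x = (v, None) /\ pobj G y = (v, Some b) /\
     ppos G y = 0 /\ ppos G x = attach_pos v (if b then DE else DS))
  \/ (* last internal vertex of (v, Some b) -> P_w, w the other endpoint *)
  (exists v w b, other_end v w b /\ pobj G x = (v, Some b) /\
     pobj G y = (w, None) /\ ppos G x = (plen G (v, Some b)).-1 /\
     ppos G y = attach_pos w (if b then DW else DN))
  \/ (* unsubdivided edge (v, Some b): P_v -> P_w directly *)
  (exists v w b, other_end v w b /\ gvalid (v, Some b) /\
     plen G (v, Some b) = 0 /\
     pobj G x = (v, None) /\ pobj G y = (w, None) /\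
     ppos G x = attach_pos v (if b then DE else DS) /\
     ppos G y = attach_pos w (if b then DW else DN)).

Definition padj (x y : V) : Prop := padj0 x y \/ padj0 y x.

End PseudogridGraph.

(* a grid vertex (as nat pair) lies in {1+r,...,k-r}^2 (0-indexed:
   {r,...,k-1-r}^2) *)
Definition in_int_pt (k r : nat) (u : nat * nat) : bool :=
  [&& r <= u.1, u.1 + r < k, r <= u.2 & u.2 + r < k].

(* mu in VE(int_r(G_k)) : int_r(G_k) is an induced subgraph *)
Definition VE_int (k r : nat) : {set gobj k} :=
  [set o | gvalid o & all (in_int_pt k r) (gends o)].

Definition int_G k (V : finType) (G : pseudogrid k V) (r : nat) : {set V} :=
  [set x | pobj G x \in VE_int k r].

Definition in_box k (r : nat) (mu : gobj k) (u : nat * nat) : bool :=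
  has (fun w : nat * nat =>
         (maxn u.1 w.1 - minn u.1 w.1 <= r) && (maxn u.2 w.2 - minn u.2 w.2 <= r))
      (gends mu).

Definition VE_box k (r : nat) (mu : gobj k) : {set gobj k} :=
  [set o | gvalid o & all (in_box r mu) (gends o)].

Definition tbox k (V : finType) (G : pseudogrid k V) (r : nat) (mu : gobj k)
  : {set V} := [set x | pobj G x \in VE_box r mu].

Definition tbox_v k (V : finType) (G : pseudogrid k V) (r : nat) (v : V)
  : {set V} := tbox G r (pobj G v).

Definition colours (V C : finType) (phi : V -> C) : {set C} := [set phi x | x in V].

Definition colclass (V C : finType) (phi : V -> C) (a : C) : {set V} :=
  [set x | phi x == a].

Definition phiP k (V C : finType) (G : pseudogrid k V) (phi : V -> C)
  (mu : gobj k) : {set C} := [set phi x | x in [set x | pobj G x == mu]].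

Definition phiP_inv k (V C : finType) (G : pseudogrid k V) (phi : V -> C)
  (A : {set C}) : {set gobj k} :=
  [set mu in VE k | [exists a in A, a \in phiP G phi mu]].

(* Main.v *)
Require Import Defs.
From mathcomp Require Import all_boot.
From Stdlib Require Import Reals.
From mathcomp Require Import zify.
From Stdlib Require Import Lra.
Set Implicit Arguments. Unset Strict Implicit. Unset Printing Implicit Defensive.

Section Hall.
Variables (L R : finType) (rel : L -> R -> bool) (y0 : R).

Definition NB (Rs : {set R}) (A : {set L}) : {set R} :=
  [set y in Rs | [exists x in A, rel x y]].

Lemma NB_sub (Rs : {set R}) (A : {set L}) : NB Rs A \subset Rs.
Proof. by apply/subsetP=> y; rewrite inE => /andP[]. Qed.

Lemma NBU (Rs : {set R}) (A B : {set L}) : NB Rs (A :|: B) = NB Rs A :|: NB Rs B.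
Proof.
apply/setP=> y; rewrite !inE.
case: (y \in Rs) => //=.
apply/existsP/orP.
- by case=> x /andP[]; rewrite inE => /orP[] xi r; [left|right]; apply/existsP; exists x; rewrite xi.
- by case=> /existsP[x /andP[xi r]]; exists x; rewrite inE xi ?orbT.
Qed.

Lemma NB_mono (Rs : {set R}) (A B : {set L}) : A \subset B -> NB Rs A \subset NB Rs B.
Proof.
move=> /subsetP sAB; apply/subsetP=> y; rewrite !inE => /andP[-> /existsP[x /andP[xa r]]].
by apply/existsP; exists x; rewrite sAB.
Qed.

Lemma hall_gen m : forall (Ls : {set L}) (Rs : {set R}), #|Ls| <= m ->
  (forall A : {set L}, A \subset Ls -> #|A| <= #|NB Rs A|) ->
  exists f : L -> R, (forall x, x \in Ls -> (f x \in Rs) && rel x (f x)) /\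
     {in Ls &, injective f}.
Proof.
elim: m => [|m IH] Ls Rs.
  rewrite leqn0 cards_eq0 => /eqP -> _.
  by exists (fun _ => y0); split=> [x|x y]; rewrite inE.
move=> cLs H.
case: (set_0Vmem Ls) => [->|[x0 x0L]].
  by exists (fun _ => y0); split=> [x|x y]; rewrite inE.
case: (boolP [exists A : {set L}, [&& A \subset Ls, A != set0, A != Ls & #|NB Rs A| <= #|A|]]).
- move=> /existsP[A /and4P[sAL A0 AL tA]].
  have ltA : #|A| < #|Ls| by apply: proper_card; rewrite properEneq AL sAL.
  have [f1 [f1P f1I]] : exists f : L -> R, (forall x, x \in A -> (f x \in NB Rs A) && rel x (f x)) /\
     {in A &, injective f}.
    apply: IH; first by rewrite -ltnS (leq_trans ltA).
    move=> B sBA.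
    have -> : NB (NB Rs A) B = NB Rs B.
      apply/setP=> y; rewrite !inE; apply/andP/andP.
        by case=> /andP[].
      case=> yR /existsP[x /andP[xB r]]; split=> //.
      rewrite yR; apply/existsP; exists x; rewrite r andbT.
      by move/subsetP: sBA; apply.
      by apply/existsP; exists x; rewrite xB.
    by apply: H; apply: subset_trans sAL.
  have [f2 [f2P f2I]] : exists f : L -> R, (forall x, x \in Ls :\: A -> (f x \in Rs :\: NB Rs A) && rel x (f x)) /\
     {in Ls :\: A &, injective f}.
    apply: IH.
      have : #|Ls :\: A| < #|Ls|.
        rewrite cardsD (setIidPr sAL); rewrite -subn_gt0 subKn ?subset_leq_card //.
        by rewrite lt0n cards_eq0.
      by move=> h; rewrite -ltnS (leq_trans h).
    move=> B sB.
    have dAB : [disjoint A & B].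
      rewrite -setI_eq0; apply/eqP/setP=> x; rewrite !inE.
      apply/negbTE; apply/negP=> /andP[xa xb].
      by move/subsetP: sB => /(_ x xb); rewrite inE xa.
    have hU := H (A :|: B).
    have : A :|: B \subset Ls.
      by rewrite subUset sAL (subset_trans sB) // subDset subsetUr.
    move=> /hU; rewrite NBU !cardsU.
    have -> : A :&: B = set0 by apply/eqP; rewrite setI_eq0.
    rewrite cards0 subn0 => h.
    have -> : NB (Rs :\: NB Rs A) B = NB Rs B :\: NB Rs A.
      apply/setP=> y; rewrite !inE; case: (y \in Rs); rewrite ?andbF ?andbT //=.
    have := cardsID (NB Rs A) (NB Rs B).
    rewrite setIC => hc.
    move: (subset_leq_card (subsetIl (NB Rs A) (NB Rs B))) => h2.
    move: (subset_leq_card (subsetIr (NB Rs A) (NB Rs B))) => h3.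
    lia.
  exists (fun x => if x \in A then f1 x else f2 x); split.
    move=> x xL; case: ifP => xA.
      by case/andP: (f1P x xA) => /subsetP-> //; apply: NB_sub.
    have : x \in Ls :\: A by rewrite inE xA.
    by move/f2P; rewrite inE => /andP[/andP[_ ->]].
  move=> x y xL yL /=.
  case: ifP=> xA; case: ifP=> yA.
  - by apply: f1I.
  - move=> e; have : y \in Ls :\: A by rewrite inE yA.
    move/f2P; rewrite inE -e; case/andP: (f1P x xA) => -> //.
  - move=> e; have : x \in Ls :\: A by rewrite inE xA.
    move/f2P; rewrite inE e; case/andP: (f1P y yA) => -> //.
  - by apply: f2I; rewrite inE ?xA ?yA.
- rewrite negb_exists => /forallP nT.
  have : #|[set x0]| <= #|NB Rs [set x0]| by apply: H; rewrite sub1set.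
  rewrite cards1 card_gt0 => /set0Pn [y].
  rewrite inE => /andP[yR /existsP[zz /andP[]]]; rewrite inE => /eqP-> rxy.
  have [f2 [f2P f2I]] : exists f : L -> R, (forall x, x \in Ls :\ x0 -> (f x \in Rs :\ y) && rel x (f x)) /\
     {in Ls :\ x0 &, injective f}.
    apply: IH.
      by move: cLs; rewrite (cardsD1 x0 Ls) x0L.
    move=> B sB.
    case: (set_0Vmem B) => [->|[b bB]]; first by rewrite cards0.
    have := nT B.
    have sBL : B \subset Ls by apply: subset_trans sB (subsetDl _ _).
    have BL : B != Ls.
      apply/eqP=> e; move/subsetP: sB => /(_ x0); rewrite e x0L !inE eqxx; by move=> /(_ isT).
    have B0 : B != set0 by apply/set0Pn; exists b.
    rewrite sBL B0 BL /= -ltnNge => h.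
    have -> : NB (Rs :\ y) B = NB Rs B :\ y.
      apply/setP=> z; rewrite !inE; case: (z \in Rs); rewrite ?andbF ?andbT //=.
    have := cardsID [set y] (NB Rs B); move: (subset_leq_card (subsetIr (NB Rs B) [set y])); rewrite cards1 setIC.
    lia.
  exists (fun x => if x == x0 then y else f2 x); split.
    move=> x xL; case: eqP => [->|ne]; first by rewrite yR.
    have : x \in Ls :\ x0 by rewrite !inE xL andbT; apply/eqP.
    by move/f2P; rewrite !inE => /andP[/andP[_ ->]].
  move=> a b aL bL /=.
  case: eqP => ea; case: eqP => eb.
  + by rewrite ea eb.
  + move=> e; have : b \in Ls :\ x0 by rewrite !inE bL andbT; apply/eqP.
    by move/f2P; rewrite !inE -e eqxx.
  + move=> e; have : a \in Ls :\ x0 by rewrite !inE aL andbT; apply/eqP.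
    by move/f2P; rewrite !inE e eqxx.
  + by apply: f2I; rewrite !inE ?aL ?bL andbT; apply/eqP.
Qed.

End Hall.


Lemma union_bound (T I : finType) (A : {set T}) (J : {set I}) (F : I -> {set T}) :
  (forall x, x \in A -> exists2 i, i \in J & x \in F i) ->
  #|A| <= \sum_(i in J) #|F i|.
Proof.
move=> H.
have sA : A \subset \bigcup_(i in J) F i.
  apply/subsetP=> x /H [i iJ xF]; by apply/bigcupP; exists i.
apply: (leq_trans (subset_leq_card sA)).
elim/big_rec2: _ => [|i y1 y2 _ h]; first by rewrite cards0.
apply: leq_trans (leq_card_setU _ _) _.
by rewrite leq_add2l.
Qed.

Section LLL.
Variables (P : finType) (n : nat) (E : finType) (ep1 ep2 : E -> P) (ea1 ea2 : E -> 'I_n).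

Definition occ (g : {ffun P -> 'I_n}) e := (g (ep1 e) == ea1 e) && (g (ep2 e) == ea2 e).
Definition good (S : {set E}) := [set g : {ffun P -> 'I_n} | [forall e in S, ~~ occ g e]].
Definition Mset (S : {set E}) e := [set g in good S | occ g e].
Definition touches p e := (ep1 e == p) || (ep2 e == p).

Lemma good_sub (S T : {set E}) : S \subset T -> good T \subset good S.
Proof.
move=> /subsetP sST; apply/subsetP=> g; rewrite !inE => /forall_inP h.
by apply/forall_inP=> e /sST /h.
Qed.

Lemma indep (S : {set E}) e : ep1 e != ep2 e ->
  (forall f, f \in S -> ~~ touches (ep1 e) f && ~~ touches (ep2 e) f) ->
  #|good S| = n * n * #|Mset S e|.
Proof.
move=> ne hS.
pose upd (g : {ffun P -> 'I_n}) (a b : 'I_n) : {ffun P -> 'I_n} :=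
  [ffun p => if p == ep1 e then a else if p == ep2 e then b else g p].
have occU : forall g a b f, f \in S -> occ (upd g a b) f = occ g f.
  move=> g a b f /hS; rewrite /touches !negb_or => /andP[/andP[h1 h2] /andP[h3 h4]].
  by rewrite /occ !ffunE (negbTE h1) (negbTE h2) eq_sym (negbTE h3) eq_sym (negbTE h4) /=.
have goodU : forall g a b, (upd g a b \in good S) = (g \in good S).
  move=> g a b; rewrite !inE; apply/forall_inP/forall_inP=> h f fS.
    by rewrite -(occU g a b f fS); apply: h.
  by rewrite occU //; apply: h.
pose Phi (t : ('I_n * 'I_n) * {ffun P -> 'I_n}) := upd t.2 t.1.1 t.1.2.
pose D := setX [set: 'I_n * 'I_n] (Mset S e).
have cD : #|D| = n * n * #|Mset S e| by rewrite cardsX cardsT card_prod card_ord.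
rewrite -cD.
have -> : good S = Phi @: D.
  apply/setP=> g; apply/idP/imsetP.
    move=> gG; exists ((g (ep1 e), g (ep2 e)), upd g (ea1 e) (ea2 e)).
      rewrite /D in_setX in_setT /= /Mset inE goodU gG /= /occ !ffunE eqxx /=.
      by rewrite eqxx [ep2 e == _]eq_sym (negbTE ne) !eqxx.
    apply/ffunP=> p; rewrite /Phi /= !ffunE.
    by case: eqP => [->//|_]; case: eqP => [->//|_].
  case=> [[[a b] h]]; rewrite /D in_setX /Mset inE /= => /andP[_ /andP[hG _]] ->.
  by rewrite /Phi /= goodU.
rewrite card_in_imset //.
move=> [[a b] g] [[a' b'] g']; rewrite /D !in_setX /Mset !inE /= => /andP[_ og] /andP[_ og'].
rewrite /Phi /= => eq.
have e1 := congr1 (fun h : {ffun P -> 'I_n} => h (ep1 e)) eq.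
have e2 := congr1 (fun h : {ffun P -> 'I_n} => h (ep2 e)) eq.
move: e1 e2; rewrite /= !ffunE eqxx eq_sym (negbTE ne) eqxx => -> ->.
congr (_, _).
apply/ffunP=> p.
have := congr1 (fun h : {ffun P -> 'I_n} => h p) eq; rewrite /= !ffunE.
case: eqP => [->|_]; first by move: og og' => /andP[/eqP -> _] /andP[/eqP -> _].
case: eqP => [->|_] //; by move: og og' => /andP[_ /eqP ->] /andP[_ /eqP ->].
Qed.

Variables (Sb : {set E}) (L : nat).
Hypothesis hne : forall e, e \in Sb -> ep1 e != ep2 e.
Hypothesis hL : forall p, #|[set e in Sb | touches p e]| <= L.
Hypothesis hn : 8 * L <= n * n.
Hypothesis hn2 : 2 <= n.

Lemma lll_key m : forall S : {set E}, S \subset Sb -> #|S| <= m ->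
  forall e, e \in Sb -> n * n * #|Mset S e| <= 2 * #|good S|.
Proof.
elim: m => [|m IH] S sS cS e eS.
  move: cS; rewrite leqn0 cards_eq0 => /eqP ->.
  rewrite (indep (S:=set0) (hne eS)) //; last by move=> f; rewrite inE.
  lia.
pose S1 := [set f in S | touches (ep1 e) f || touches (ep2 e) f].
pose S2 := S :\: S1.
have sS2 : S2 \subset S by apply: subsetDl.
have hM : #|Mset S e| <= #|Mset S2 e|.
  apply: subset_leq_card; apply/subsetP=> g; rewrite !inE => /andP[gG ->].
  by rewrite andbT; move/subsetP: (good_sub sS2) => /(_ g); rewrite !inE; apply.
have hI : #|good S2| = n * n * #|Mset S2 e|.
  apply: indep; first exact: hne.
  move=> f; rewrite !inE => /andP[]; rewrite negb_and negb_or => /orP[/negbTE -> //| h _]; exact: h.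
have hU : #|good S2| <= #|good S| + \sum_(f in S1) #|Mset S2 f|.
  have h1 := cardsID (good S) (good S2).
  have h2 := subset_leq_card (subsetIr (good S2) (good S)).
  have h3 : #|good S2 :\: good S| <= \sum_(f in S1) #|Mset S2 f|.
    apply: union_bound => g; rewrite in_setD => /andP[gn gG].
    have gG' := gG; rewrite inE in gG'; move/forall_inP: gG' => gG'.
    have : ~~ [forall e in S, ~~ occ g e] by move: gn; rewrite inE.
    rewrite negb_forall_in => /existsP[f /andP[fS oc]].
    have fS1 : f \in S1.
      apply/negPn/negP=> nf.
      have : f \in S2 by rewrite inE nf fS.
      by move/gG'; move/negP: oc.
    by exists f => //; rewrite /Mset inE gG (negPn oc).
  lia.
have hS1 : #|S1| <= 2 * L.
  apply: leq_trans (_ : _ <= #|[set f in Sb | touches (ep1 e) f]| + #|[set f in Sb | touches (ep2 e) f]|) _.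
    apply: leq_trans (leq_card_setU _ _).
    apply: subset_leq_card; apply/subsetP=> f; rewrite !inE => /andP[fS /orP[]] ->;
      move/subsetP: sS => /(_ f fS) -> //; by rewrite orbT.
  have := hL (ep1 e); have := hL (ep2 e); lia.
have hsum : \sum_(f in S1) (n * n * #|Mset S2 f|) <= #|S1| * (2 * #|good S2|).
  rewrite -sum_nat_const; apply: leq_sum => f fS1.
  apply: IH.
  - by apply: subset_trans sS2 sS.
  - have : #|S2| < #|S|.
      apply: proper_card; rewrite properEneq sS2 andbT.
      apply/eqP=> h; have := fS1; rewrite inE => /andP[fS _].
      by move: fS; rewrite -h inE fS1.
    lia.
  - by move: fS1; rewrite inE => /andP[/(subsetP sS)].
have : n * n * #|good S2| <= n * n * #|good S| + #|S1| * (2 * #|good S2|).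
  apply: leq_trans (_ : _ <= n * n * #|good S| + \sum_(f in S1) (n * n * #|Mset S2 f|)) _.
    by rewrite -big_distrr /= -mulnDr leq_mul2l hU orbT.
  by rewrite leq_add2l.
move=> h.
have h2 : #|S1| * (2 * #|good S2|) * 2 <= n * n * #|good S2|.
  have hh : #|S1| * 4 <= n * n by lia.
  have -> : #|S1| * (2 * #|good S2|) * 2 = #|S1| * 4 * #|good S2|.
    lia.
  by rewrite leq_mul2r hh orbT.
have h3 : #|good S2| <= 2 * #|good S|.
  have nn0 : 0 < n * n by lia.
  have h4 : n * n * #|good S2| <= 2 * (n * n * #|good S|) by lia.
  by rewrite -(leq_pmul2l nn0) mulnCA.
apply: leq_trans (_ : _ <= n * n * #|Mset S2 e|) _; first by rewrite leq_mul2l hM orbT.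
by rewrite -hI.
Qed.

Lemma lll : exists g : {ffun P -> 'I_n}, forall e, e \in Sb -> ~~ occ g e.
Proof.
suff : forall m (S : {set E}), S \subset Sb -> #|S| <= m -> 0 < #|good S|.
  move/(_ #|Sb| Sb (subxx _) (leqnn _)); rewrite card_gt0 => /set0Pn[g].
  by rewrite inE => /forall_inP h; exists g.
have n0 : 0 < n by lia.
elim=> [|m IH] S sS cS.
  move: cS; rewrite leqn0 cards_eq0 => /eqP ->.
  apply/card_gt0P; exists [ffun=> Ordinal n0]; rewrite inE; apply/forall_inP=> f; by rewrite inE.
case: (set_0Vmem S) => [->|[e eS]].
  apply/card_gt0P; exists [ffun=> Ordinal n0]; rewrite inE; apply/forall_inP=> f; by rewrite inE.
pose S' := S :\ e.
have sS' : S' \subset Sb by apply: subset_trans (subsetDl _ _) sS.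
have cS' : #|S'| <= m by move: cS; rewrite (cardsD1 e S) eS.
have pos := IH S' sS' cS'.
have eSb : e \in Sb by move/subsetP: sS; apply.
have key := lll_key sS' (leqnn _) eSb.
have : #|good S'| = #|good S| + #|Mset S' e|.
  rewrite -(cardsID [set g | occ g e] (good S')) addnC; congr (_ + _).
    apply: eq_card=> g; rewrite !inE.
    apply/andP/forall_inP.
      case=> no /forall_inP h f fS; case: (f =P e) => [->//|ne].
      by apply: h; rewrite !inE; apply/andP; split => //; apply/eqP.
    move=> h; split; first by apply: h.
    by apply/forall_inP=> f; rewrite !inE => /andP[_ /h].
  by apply: eq_card=> g; rewrite !inE.
move=> h.
have : 4 * #|Mset S' e| <= 2 * #|good S'|.
  apply: leq_trans key; rewrite leq_mul2r; apply/orP; right; nia.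
lia.
Qed.

End LLL.


Lemma div_close (u a s : nat) : 0 < s -> u <= a + s -> u %/ s <= a %/ s + 1.
Proof.
move=> s0 h; apply: leq_trans (leq_div2r s h) _.
by have := divnDMl 1 a s0; rewrite mul1n => ->.
Qed.

Definition cellv k (s : nat) (v : gvert k) : gvert k :=
  (Ordinal (leq_ltn_trans (leq_div v.1 s) (ltn_ord v.1)),
   Ordinal (leq_ltn_trans (leq_div v.2 s) (ltn_ord v.2))).

Definition adjc k (c c' : gvert k) : bool :=
  [&& (c.1 : nat) <= c'.1 + 1, (c'.1 : nat) <= c.1 + 1,
      (c.2 : nat) <= c'.2 + 1 & (c'.2 : nat) <= c.2 + 1].

Lemma inbox_close k r (mu : gobj k) (u : nat * nat) :
  in_box r mu u ->
  [/\ u.1 <= mu.1.1 + r.+1, (mu.1.1 : nat) <= u.1 + r,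
      u.2 <= mu.1.2 + r.+1 & (mu.1.2 : nat) <= u.2 + r].
Proof.
case: mu => [[a b] o]; case: u => [u1 u2].
rewrite /in_box /gends /=.
case: o => [[]|] /=; rewrite ?orbF;
  (try case/orP); move=> /andP[h1 h2]; split; lia.
Qed.

Lemma tbox_close k (V : finType) (G : pseudogrid k V) r (x y : V) :
  y \in tbox_v G r x ->
  [/\ ((pobj G y).1.1 : nat) <= (pobj G x).1.1 + r.+1, ((pobj G x).1.1 : nat) <= (pobj G y).1.1 + r,
      ((pobj G y).1.2 : nat) <= (pobj G x).1.2 + r.+1 & ((pobj G x).1.2 : nat) <= (pobj G y).1.2 + r].
Proof.
rewrite /tbox_v /tbox /VE_box !inE => /andP[_].
move: (pobj G y) => [[a b] o].
have -> : gends ((a, b, o) : gobj k) = ((a : nat), (b : nat)) :: behead (gends ((a, b, o) : gobj k)).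
  by case: o => [[]|].
rewrite /= => /andP[/inbox_close /= [h1 h2 h3 h4] _] /=; split; lia.
Qed.

Lemma tbox_adj k (V : finType) (G : pseudogrid k V) r (x y : V) :
  y \in tbox_v G r x -> adjc (cellv r.+2 (pobj G x).1) (cellv r.+2 (pobj G y).1).
Proof.
case/tbox_close => h1 h2 h3 h4.
rewrite /adjc /cellv /=.
apply/and4P; split; apply: div_close => //; lia.
Qed.


Definition Pc (Col : finType) (A : {set Col}) := {a : Col | a \in A}.

Lemma adjcC k (c c' : gvert k) : adjc c c' = adjc c' c.
Proof. rewrite /adjc; apply/and4P/and4P; case=> *; split; lia. Qed.

Definition off k (c c' : gvert k) : 'I_3 * 'I_3 :=
  (inord (c'.1 + 1 - c.1), inord (c'.2 + 1 - c.2)).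

Lemma off_inj k (c c1 c2 : gvert k) : adjc c c1 -> adjc c c2 -> off c c1 = off c c2 -> c1 = c2.
Proof.
case: c1 => x1 y1; case: c2 => x2 y2.
rewrite /adjc /off /= => /and4P[a1 a2 a3 a4] /and4P[b1 b2 b3 b4] [e1 e2].
have f1 : x1 + 1 - c.1 = x2 + 1 - c.1 :> nat.
  by move: (congr1 val e1); rewrite /= !inordK; lia.
have f2 : y1 + 1 - c.2 = y2 + 1 - c.2 :> nat.
  by move: (congr1 val e2); rewrite /= !inordK; lia.
by congr (_, _); apply: val_inj => /=; lia.
Qed.

Lemma card_inj_le (T U : finType) (f : T -> U) (A : {set T}) (B : {set U}) :
  {in A &, injective f} -> (forall x, x \in A -> f x \in B) -> #|A| <= #|B|.
Proof.
move=> fi fB; rewrite -(card_in_imset fi); apply: subset_leq_card.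
by apply/subsetP=> y /imsetP[x xA ->]; apply: fB.
Qed.

Lemma combi (r k : nat) (k0 : 0 < k) (V : finType) (G : pseudogrid k V) (Col : finType) (phi : V -> Col) :
  (forall A : {set Col}, A \subset colours phi ->
       (2 * 144 * (r.+2 * r.+2 * 3)) * #|A| <= #|phiP_inv G phi A :&: VE_int k r|) ->
    exists S : {set V},
      S \subset int_G G r /\
      (forall a, a \in colours phi -> #|colclass phi a :&: S| = 2) /\
      (forall v, v \in S -> #|tbox_v G r v :&: S| <= 2).
Proof.
move=> Hyp.
pose v0 : gvert k := (Ordinal k0, Ordinal k0).
have [x0 _] : exists x : V, True.
  have [x [_ _]] := ppos_surj (erefl true : gvalid ((v0, None) : gobj k)) (plen_vert G v0).
  by exists x.
pose cellx (x : V) := cellv r.+2 (pobj G x).1.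
pose Lt := ((Pc (colours phi) * bool) * 'I_144)%type.
pose rel (l : Lt) (c : gvert k) := [exists x : V, [&& pobj G x \in VE_int k r, cellx x == c & phi x == val l.1.1]].
have [h [hP hI]] : exists h : Lt -> gvert k, (forall x, x \in [set: Lt] -> (h x \in [set: gvert k]) && rel x (h x)) /\
     {in [set: Lt] &, injective h}.
  apply: (@hall_gen Lt (gvert k) rel v0 #|[set: Lt]| setT setT (leqnn _)).
  move=> A _.
  pose Acol := [set val l.1.1 | l in A].
  have sAc : Acol \subset colours phi.
    by apply/subsetP=> a /imsetP[l _ ->]; apply: valP.
  have c1 : #|A| <= #|Acol| * 2 * 144.
    have -> : #|Acol| * 2 * 144 = #|setX (setX Acol [set: bool]) [set: 'I_144]|.
      by rewrite !cardsX !cardsT card_bool card_ord.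
    apply: (@card_inj_le _ _ (fun l : Lt => ((val l.1.1, l.1.2), l.2))).
      move=> [[[a ha] b] i] [[[a' ha'] b'] i'] _ _ /= [ea eb ei].
      subst; congr (_, _, _); exact: val_inj.
    move=> l lA; rewrite !inE /= andbT andbT; apply/imsetP; by exists l.
  have c2 := Hyp Acol sAc.
  have c3 : #|phiP_inv G phi Acol :&: VE_int k r| <= #|NB rel setT A| * (r.+2 * r.+2 * 3).
    have -> : #|NB rel setT A| * (r.+2 * r.+2 * 3) =
              #|setX (NB rel setT A) [set: ('I_r.+2 * 'I_r.+2) * option bool]|.
      by rewrite cardsX cardsT !card_prod !card_ord card_option card_bool.
    apply: (@card_inj_le _ _ (fun mu : gobj k => (cellv r.+2 mu.1,
         ((inord (mu.1.1 %% r.+2) : 'I_r.+2, inord (mu.1.2 %% r.+2) : 'I_r.+2), mu.2)))).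
      move=> [[a b] o] [[a' b'] o'] _ _ /= [ec1 ec2 em1 em2 eo].
      have m1 : a %% r.+2 = a' %% r.+2.
        by move/(congr1 val): em1; rewrite /= !inordK // ltn_pmod.
      have m2 : b %% r.+2 = b' %% r.+2.
        by move/(congr1 val): em2; rewrite /= !inordK // ltn_pmod.
      rewrite eo; congr (_, _, _); apply: val_inj => /=.
        by rewrite (divn_eq a r.+2) (divn_eq a' r.+2) ec1 m1.
      by rewrite (divn_eq b r.+2) (divn_eq b' r.+2) ec2 m2.
    move=> mu; rewrite in_setI => /andP[muP muI].
    rewrite in_setX in_setT andbT /NB inE in_setT /=.
    move: muP; rewrite /phiP_inv inE => /andP[_ /existsP[a /andP[aA aP]]].
    move: aA => /imsetP[l lA ea].
    move: aP; rewrite /phiP => /imsetP[x]; rewrite inE => /eqP xmu ax.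
    apply/existsP; exists l; rewrite lA /=.
    apply/existsP; exists x; rewrite xmu muI /cellx xmu eqxx /=.
    by rewrite -ea ax.
  have T0 : 0 < r.+2 * r.+2 * 3 by rewrite !muln_gt0.
  move: (r.+2 * r.+2 * 3) T0 c2 c3 => T T0 c2 c3.
  have : 2 * 144 * #|Acol| <= #|NB rel setT A|.
    rewrite -(leq_pmul2r T0); lia.
  move=> hh; apply: (leq_trans c1); apply: leq_trans hh; lia.
pose Pt := (Pc (colours phi) * bool)%type.
pose E := (Lt * Lt)%type.
pose Sb := [set e : E | (e.1.1 != e.2.1) && adjc (h e.1) (h e.2)].
have hinj : forall l1 l2, h l1 = h l2 -> l1 = l2 by move=> l1 l2; apply: hI; rewrite inE.
have [g gP] : exists g : {ffun Pt -> 'I_144}, forall e, e \in Sb ->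
   ~~ occ (fun e : E => e.1.1) (fun e : E => e.2.1) (fun e : E => e.1.2) (fun e : E => e.2.2) g e.
  apply: (@lll Pt 144 E (fun e : E => e.1.1) (fun e : E => e.2.1) (fun e : E => e.1.2) (fun e : E => e.2.2) Sb (18 * 144)).
  - by move=> e; rewrite inE => /andP[].
  - move=> p.
    apply: leq_trans (_ : _ <= #|[set e in Sb | e.1.1 == p]| + #|[set e in Sb | e.2.1 == p]|) _.
      apply: leq_trans (leq_card_setU _ _); apply: subset_leq_card; apply/subsetP => e.
      by rewrite !inE /touches => /andP[-> /orP[] ->]; rewrite ?orbT.
    have b1 : #|[set e in Sb | e.1.1 == p]| <= 144 * 9.
      have -> : 144 * 9 = #|[set: 'I_144 * ('I_3 * 'I_3)]| by rewrite cardsT !card_prod !card_ord.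
      apply: (@card_inj_le _ _ (fun e : E => (e.1.2, off (h e.1) (h e.2)))); last by move=> *; rewrite inE.
      move=> [[p1 a1] l1] [[p2 a2] l2]; rewrite !inE /= => /andP[/andP[_ ad1] /eqP ep1] /andP[/andP[_ ad2] /eqP ep2] [ea eo1 eo2].
      subst p1 p2 a2.
      by rewrite (hinj _ _ (off_inj ad1 ad2 (_ : off _ _ = off _ _))) // /off eo1 eo2.
    have b2 : #|[set e in Sb | e.2.1 == p]| <= 144 * 9.
      have -> : 144 * 9 = #|[set: 'I_144 * ('I_3 * 'I_3)]| by rewrite cardsT !card_prod !card_ord.
      apply: (@card_inj_le _ _ (fun e : E => (e.2.2, off (h e.2) (h e.1)))); last by move=> *; rewrite inE.
      move=> [l1 [p1 a1]] [l2 [p2 a2]]; rewrite !inE /= => /andP[/andP[_ ad1] /eqP ep1] /andP[/andP[_ ad2] /eqP ep2] [ea eo1 eo2].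
      rewrite adjcC in ad1; rewrite adjcC in ad2.
      subst p1 p2 a2.
      by rewrite (hinj _ _ (off_inj ad1 ad2 (_ : off _ _ = off _ _))) // /off eo1 eo2.
    lia.
  - by [].
  - by [].
pose xs (p : Pt) := odflt x0 [pick x | [&& pobj G x \in VE_int k r, cellx x == h (p, g p) & phi x == val p.1]].
have xsP : forall p, [&& pobj G (xs p) \in VE_int k r, cellx (xs p) == h (p, g p) & phi (xs p) == val p.1].
  move=> p; rewrite /xs; case: pickP => [x hx //|none].
  have := hP (p, g p); rewrite in_setT => /(_ isT) /andP[_ /existsP[x hx]].
  by move: (none x); rewrite hx.
have xs_cell : forall p, cellx (xs p) = h (p, g p) by move=> p; case/and3P: (xsP p) => _ /eqP.
have xs_col : forall p, phi (xs p) = val p.1 by move=> p; case/and3P: (xsP p) => _ _ /eqP.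
exists [set xs p | p in [set: Pt]]; split; last split.
- apply/subsetP=> x /imsetP[p _ ->]; rewrite inE.
  by case/and3P: (xsP p).
- move=> a ha.
  pose ap : Pc (colours phi) := exist _ a ha.
  have -> : colclass phi a :&: [set xs p | p in [set: Pt]] = [set xs (ap, true); xs (ap, false)].
    apply/setP=> x; rewrite !inE; apply/andP/orP.
      case=> /eqP xa /imsetP[p _ xp].
      have pa : p.1 = ap by apply: val_inj; rewrite /= -xs_col -xp.
      by case: p pa xp => [p1 []] /= -> ->; [left|right].
    case=> /eqP ->; (split; [by rewrite xs_col|by apply/imsetP; eexists]).
  rewrite cards2; case: eqP => // e.
  have := congr1 cellx e; rewrite !xs_cell => /hinj/(congr1 (fun l : Lt => l.1.2)) H; discriminate H.
- move=> v; case/imsetP=> p _ ->.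
  apply: leq_trans (_ : #|[set xs p]| <= 2); last by rewrite cards1.
  apply: subset_leq_card; apply/subsetP=> w; rewrite in_setI => /andP[wb /imsetP[q _ wq]].
  rewrite inE; subst w.
  case: (p =P q) => [-> //|pq].
  have := gP (((p, g p), (q, g q)) : E).
  rewrite /occ /= !eqxx /= => H; exfalso.
  suff : (((p, g p), (q, g q)) : E) \in Sb by move/H.
  rewrite inE /=; apply/andP; split; first by apply/eqP.
  by rewrite -!xs_cell; apply: tbox_adj.
Qed.


Theorem lemma14 :
  exists C : R, forall r : nat, 10 <= r ->
  exists d : nat, (INR d <= C * INR r ^ 4 * ln (INR r))%R /\
  forall (k : nat), 1 <= k ->
  forall (V : finType) (G : pseudogrid k V) (Col : finType) (phi : V -> Col),
    (forall A : {set Col}, A \subset colours phi ->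
       d * #|A| <= #|phiP_inv G phi A :&: VE_int k r|) ->
    exists S : {set V},
      S \subset int_G G r /\
      (forall a, a \in colours phi -> #|colclass phi a :&: S| = 2) /\
      (forall v, v \in S -> #|tbox_v G r v :&: S| <= 2).
Proof.
exists (INR 2000); move=> r r10.
exists (2 * 144 * (r.+2 * r.+2 * 3)); split; last first.
  by move=> k k1 V G Col phi H; apply: (combi k1 H).
have hn : 2 * 144 * (r.+2 * r.+2 * 3) <= 2000 * (r * r * r * r) by nia.
have hl : (1 <= ln (INR r))%R.
  rewrite -{1}(ln_exp 1); apply: Rlt_le; apply: ln_increasing; first by apply: exp_pos.
  apply: Rle_lt_trans (exp_le_3) _.
  have : (INR 10 <= INR r)%R by apply: le_INR; apply/leP.
  rewrite /= ; lra.
apply: Rle_trans (_ : (INR 2000 * INR r ^ 4 <= _)%R).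
  have -> : (INR r ^ 4 = INR (r * r * r * r))%R.
    rewrite !mult_INR; simpl; ring.
  rewrite -mult_INR; apply: le_INR; apply/leP; exact: hn.
rewrite -{1}(Rmult_1_r (INR 2000 * INR r ^ 4)).
apply: Rmult_le_compat_l => //.
apply: Rmult_le_pos; [apply: pos_INR | apply: pow_le; apply: pos_INR].
Qed.
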